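(* Let $T:[\ell,r)\to[\ell,r)$ be a $k$-IET over the ordered alphabet $\mathcal{A}$ with partition $(I_a)_{a\in\mathcal{A}}$ and permutation $\pi\in S_{\mathcal{A}}$. Let $\mathcal{B}\subset\mathcal{A}$ be a proper nonempty $T$-invariant sub-alphabet whose intervals $I_b$, $b\in\mathcal{B}$, are contiguous, and let $\overline{\mathcal{B}}=\mathcal{A}\setminus\mathcal{B}$. Then $S_{\mathcal{B}}$ is the IET over $\mathcal{B}$ (with the order inherited from $\mathcal{A}$) with permutation $\pi|_{\mathcal{B}}$, and $S_{\overline{\mathcal{B}}}$ is the IET over $\overline{\mathcal{B}}$ (with the inherited order) with permutation $\pi|_{\overline{\mathcal{B}}}$.
   Context: A $k$-IET on $[\ell,r)$ over $\mathcal{A}=\{a_1<\dots<a_k\}$ is given by a partition of $[\ell,r)$ into left-closed right-open intervals $(I_a)_{a\in\mathcal{A}}$ of positive length ordered left to right according to the order of $\mathcal{A}$, and a permutation $\pi$ of $\mathcal{A}$; $T(x)=x+\tau_a$ on $I_a$ with $\tau_a=\sum_{b:\,\pi^{-1}(b)<\pi^{-1}(a)}|I_b|-\sum_{b<a}|I_b|$, so the images $T(I_{\pi(a_1)}),\dots,T(I_{\pi(a_k)})$ appear from left to right. Write $I_{\mathcal{B}}=\bigcup_{b\in\mathcal{B}}I_b=[\gamma_{\mathcal{B}},\delta_{\mathcal{B}})$; $\mathcal{B}$ is $T$-invariant if $T(I_{\mathcal{B}})=I_{\mathcal{B}}$. Let $I_{\overline{\mathcal{B}}}=[\ell,r)\setminus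 I_{\mathcal{B}}$. Define $S_{\mathcal{B}}=T|_{I_{\mathcal{B}}}$. If $I_{\overline{\mathcal{B}}}$ is an interval, $S_{\overline{\mathcal{B}}}=T|_{I_{\overline{\mathcal{B}}}}$; otherwise $I_{\overline{\mathcal{B}}}=[\ell,\gamma_{\mathcal{B}})\cup[\delta_{\mathcal{B}},r)$, and with the gluing map $G(x)=x$ on $[\ell,\gamma_{\mathcal{B}})$, $G(x)=x-|I_{\mathcal{B}}|$ on $[\delta_{\mathcal{B}},r)$, one sets $S_{\overline{\mathcal{B}}}=G\circ T|_{I_{\overline{\mathcal{B}}}}\circ G^{-1}$ on $[\ell,r-|I_{\mathcal{B}}|)$, with partition given by the images $G(I_b)$, $b\in\overline{\mathcal{B}}$. *)

(* Defs.v *)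
(* Alphabet A = {a_1 < ... < a_k} is modelled as 'I_k with its
   natural order; lengths |I_a| are lam a in a real field R. *)
From HB Require Import structures.
From mathcomp Require Import all_boot all_order all_algebra all_fingroup.
Set Implicit Arguments. Unset Strict Implicit. Unset Printing Implicit Defensive.
Import Order.TTheory GRing.Theory Num.Theory.
Local Open Scope ring_scope.

Section IET.
Variables (R : realFieldType) (k : nat).

Definition top (C : {set 'I_k}) : seq 'I_k := [seq a <- enum 'I_k | a \in C].

Definition bot (C : {set 'I_k}) (sig : 'I_k -> 'I_k) : seq 'I_k :=
  [seq sig a | a <- top C].

Definition lenS (lam : 'I_k -> R) (s : seq 'I_k) : R := \sum_(b <- s) lam b.

Definition left_end (l : R) (lam : 'I_k -> R) (C : {set 'I_k}) (a : 'I_k) : R :=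
  l + lenS lam (take (index a (top C)) (top C)).

Definition inI (l : R) (lam : 'I_k -> R) (C : {set 'I_k}) (a : 'I_k) (x : R) : bool :=
  (left_end l lam C a <= x) && (x < left_end l lam C a + lam a).

Definition tau (lam : 'I_k -> R) (C : {set 'I_k}) (sig : 'I_k -> 'I_k) (a : 'I_k) : R :=
  lenS lam (take (index a (bot C sig)) (bot C sig))
  - lenS lam (take (index a (top C)) (top C)).

(* the IET over sub-alphabet C, on [l, l + sum_{c in C} lam c), with partition
   given by the lengths lam and permutation sig (a permutation of C) *)
Definition iet (l : R) (lam : 'I_k -> R) (C : {set 'I_k}) (sig : 'I_k -> 'I_k)
  (x : R) : R :=
  match [pick a in C | inI l lam C a x] with
  | Some a => x + tau lam C sig a
  | None => x
  end.

Definition T (l : R) (lam : 'I_k -> R) (pi : {perm 'I_k}) : R -> R :=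
  iet l lam [set: 'I_k] pi.

Definition r_end (l : R) (lam : 'I_k -> R) : R := l + \sum_a lam a.

(* restriction pi|_C: the permutation of C listing the letters of C in the
   order in which they appear in the bottom order pi(a_1), ..., pi(a_k) *)
Definition restr (pi : {perm 'I_k}) (C : {set 'I_k}) (a : 'I_k) : 'I_k :=
  if a \in C then nth a [seq b <- [seq pi c | c <- enum 'I_k] | b \in C]
                        (index a (top C))
  else a.

Definition inIB (l : R) (lam : 'I_k -> R) (B : {set 'I_k}) (x : R) : bool :=
  [exists b in B, inI l lam [set: 'I_k] b x].

Definition T_invariant (l : R) (lam : 'I_k -> R) (pi : {perm 'I_k}) (B : {set 'I_k}) :=
  forall y, (exists x, inIB l lam B x /\ T l lam pi x = y) <-> inIB l lam B y.

(* the intervals I_b, b in B, are contiguous: B is an interval of letters *)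
Definition contiguous (B : {set 'I_k}) :=
  forall a b c : 'I_k, a \in B -> c \in B -> (a <= b <= c)%N -> b \in B.

Definition gammaB (l : R) (lam : 'I_k -> R) (B : {set 'I_k}) : R :=
  l + \sum_(a : 'I_k | [forall b in B, (a < b)%N]) lam a.
Definition lenB (lam : 'I_k -> R) (B : {set 'I_k}) : R := \sum_(b in B) lam b.
Definition deltaB (l : R) (lam : 'I_k -> R) (B : {set 'I_k}) : R :=
  gammaB l lam B + lenB lam B.

Definition glue (l : R) (lam : 'I_k -> R) (B : {set 'I_k}) (x : R) : R :=
  if x < gammaB l lam B then x else x - lenB lam B.
Definition unglue (l : R) (lam : 'I_k -> R) (B : {set 'I_k}) (y : R) : R :=
  if y < gammaB l lam B then y else y + lenB lam B.

Definition compl_interval (l : R) (lam : 'I_k -> R) (B : {set 'I_k}) : bool :=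
  (gammaB l lam B == l) || (deltaB l lam B == r_end l lam).

(* S_B = T restricted to I_B *)
Definition S_B (l : R) (lam : 'I_k -> R) (pi : {perm 'I_k}) : R -> R := T l lam pi.

Definition S_Bbar (l : R) (lam : 'I_k -> R) (pi : {perm 'I_k}) (B : {set 'I_k})
  (y : R) : R :=
  if compl_interval l lam B then T l lam pi y
  else glue l lam B (T l lam pi (unglue l lam B y)).
Definition left_Bbar (l : R) (lam : 'I_k -> R) (B : {set 'I_k}) : R :=
  if compl_interval l lam B then (if gammaB l lam B == l then deltaB l lam B else l)
  else l.
Definition part_Bbar (l : R) (lam : 'I_k -> R) (B : {set 'I_k}) (b : 'I_k) (y : R)
  : Prop :=
  if compl_interval l lam B then is_true (inI l lam [set: 'I_k] b y)
  else exists x, inI l lam [set: 'I_k] b x /\ glue l lam B x = y.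

End IET.

(* Main.v *)
Require Import Defs.
From HB Require Import structures.
From mathcomp Require Import all_boot all_order all_algebra all_fingroup.
From mathcomp Require Import lra.
Unset Printing Implicit Defensive.
Import Order.TTheory GRing.Theory Num.Theory.
Local Open Scope ring_scope.

Section Gen.
Variables (R : realFieldType) (T : eqType) (lam : T -> R).
Hypothesis lam_gt0 : forall a, 0 < lam a.

Definition lS (s : seq T) : R := \sum_(b <- s) lam b.
Definition pre (s : seq T) (a : T) : R := lS (take (index a s) s).

Lemma lS_cons x s : lS (x :: s) = lam x + lS s.
Proof. by rewrite /lS big_cons. Qed.

Lemma lS_ge0 s : 0 <= lS s.
Proof. by rewrite /lS; apply: sumr_ge0 => i _; apply: ltW. Qed.

Lemma pre_ge0 s a : 0 <= pre s a.
Proof. exact: lS_ge0. Qed.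

Lemma pre_cons_eq x s : pre (x :: s) x = 0.
Proof. by rewrite /pre /= eqxx /= /lS big_nil. Qed.

Lemma pre_cons_neq x s a : x != a -> pre (x :: s) a = lam x + pre s a.
Proof. by move=> xa; rewrite /pre /= (negbTE xa) /= lS_cons. Qed.

Lemma take_filter_idx (s : seq T) n : uniq s ->
  take n s = [seq c <- s | (index c s < n)%N].
Proof.
elim: s n => [|x s IH] n //= /andP[xs us].
rewrite eqxx; case: n => [|n] /=.
  by rewrite (eq_filter (a2 := pred0)) ?filter_pred0 // => c; rewrite ltn0.
congr (_ :: _); rewrite IH //; apply: eq_in_filter => c cs.
have -> : (x == c) = false by apply/eqP => xc; rewrite xc cs in xs.
by [].
Qed.

Lemma tile_ex s y : 0 <= y < lS s -> uniq s ->
  exists2 a, a \in s & pre s a <= y < pre s a + lam a.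
Proof.
elim: s y => [|x s IH] y /=; first by rewrite /lS big_nil => /andP[h1 h2]; move: (le_lt_trans h1 h2); rewrite ltxx.
move=> /andP[y0 yl] /andP[xs us].
case: (ltP y (lam x)) => hy.
  by exists x; rewrite ?mem_head // pre_cons_eq add0r y0.
have [|a as_ ha] := IH (y - lam x) _ us.
  by rewrite subr_ge0 hy /= ltrBlDl -lS_cons.
have xa : x != a by apply/eqP => e; rewrite e as_ in xs.
exists a; first by rewrite in_cons as_ orbT.
rewrite pre_cons_neq //; move: ha => /andP[h1 h2]; apply/andP; split; lra.
Qed.

Lemma tile_uniq s y a b : uniq s -> a \in s -> b \in s ->
  pre s a <= y < pre s a + lam a -> pre s b <= y < pre s b + lam b -> a = b.
Proof.
elim: s y => [|x s IH] y //= /andP[xs us].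
have hx : forall c, c \in s -> x != c.
  by move=> c cs; apply/eqP => e; rewrite e cs in xs.
rewrite !in_cons => /orP[/eqP ea|as_] /orP[/eqP eb|bs].
- by rewrite ea eb.
- rewrite ea pre_cons_eq pre_cons_neq ?hx // add0r => /andP[_ h1] /andP[h2 _].
  exfalso; clear ea; have := pre_ge0 s b; lra.
- rewrite eb pre_cons_eq pre_cons_neq ?hx // add0r => /andP[h2 _] /andP[_ h1].
  exfalso; clear eb; have := pre_ge0 s a; lra.
- rewrite !pre_cons_neq ?hx // => /andP[h1 h2] /andP[h3 h4].
  apply: (IH (y - lam x)) => //; apply/andP; split; lra.
Qed.

Lemma tile_le s a : a \in s -> pre s a + lam a <= lS s.
Proof.
elim: s => [|x s IH] //=; rewrite in_cons lS_cons.
case: (eqVneq x a) => [->|xa] /=.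
  by rewrite pre_cons_eq add0r lerDl lS_ge0.
by move=> as_; rewrite pre_cons_neq // -addrA lerD2l IH.
Qed.

Lemma pre_lt s a b : uniq s -> (index a s < index b s)%N -> b \in s ->
  pre s a + lam a <= pre s b.
Proof.
elim: s => [|x s IH] //= /andP[xs us].
case: (eqVneq x a) => [xa|xa]; case: (eqVneq x b) => [xb|xb] //.
- move=> _ _; rewrite -xa pre_cons_eq pre_cons_neq // add0r lerDl pre_ge0 //.
- rewrite ltnS in_cons eq_sym (negbTE xb) /= => h bs.
  by rewrite !pre_cons_neq // -addrA lerD2l IH.
Qed.

Lemma filter_take_idx (P : pred T) s a : a \in s -> P a ->
  [seq c <- take (index a s) s | P c] = take (index a [seq c <- s | P c]) [seq c <- s | P c].
Proof.
elim: s => [|x s IH] //=; rewrite in_cons.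
case: (eqVneq x a) => [->|xa] /= => [_ Pa|as_ Pa].
  by rewrite Pa /= eqxx.
case: (P x) => /=; last by rewrite IH.
by rewrite (negbTE xa) /= IH.
Qed.

Lemma lS_split (P : pred T) s :
  lS s = lS [seq c <- s | ~~ P c] + lS [seq c <- s | P c].
Proof. by rewrite /lS !big_filter (bigID P) /= addrC. Qed.

Lemma pre_split (P : pred T) s a : a \in s -> P a ->
  pre s a = lS [seq c <- take (index a s) s | ~~ P c] + pre [seq c <- s | P c] a.
Proof.
by move=> as_ Pa; rewrite /pre -filter_take_idx // -lS_split.
Qed.

End Gen.
Arguments lS {R T}.
Arguments pre {R T}.
Arguments lS_cons {R T}.
Arguments lS_ge0 {R T}.
Arguments pre_ge0 {R T}.
Arguments pre_cons_eq {R T}.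
Arguments pre_cons_neq {R T}.
Arguments take_filter_idx {T}.
Arguments tile_ex {R T}.
Arguments tile_uniq {R T}.
Arguments tile_le {R T}.
Arguments pre_lt {R T}.
Arguments filter_take_idx {T}.
Arguments lS_split {R T}.
Arguments pre_split {R T}.


Section Spec.
Variables (R : realFieldType) (k : nat) (lam : 'I_k -> R) (pi : {perm 'I_k}).
Hypothesis lam_gt0 : forall a, 0 < lam a.

Definition e := enum 'I_k.
Definition s := [seq pi a | a <- enum 'I_k].

Lemma uniq_e : uniq e. Proof. exact: enum_uniq. Qed.
Lemma mem_e a : a \in e. Proof. by rewrite mem_enum. Qed.
Lemma uniq_s : uniq s. Proof. by rewrite map_inj_uniq ?enum_uniq //; apply: perm_inj. Qed.
Lemma mem_s a : a \in s.
Proof. by rewrite -(permKV pi a) map_f // mem_enum. Qed.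

Lemma top_setT : top [set: 'I_k] = e.
Proof. by rewrite /top (eq_filter (a2 := predT)) ?filter_predT // => a; rewrite in_setT. Qed.

Lemma bot_setT : bot [set: 'I_k] pi = s.
Proof. by rewrite /bot top_setT. Qed.

Lemma lS_full u : uniq u -> (forall c, c \in u) ->
  forall Q : pred 'I_k, lS lam [seq c <- u | Q c] = \sum_(c | Q c) lam c.
Proof.
move=> uu mu Q; rewrite /lS big_filter; apply: perm_big.
by apply: uniq_perm => // [|c]; rewrite ?index_enum_uniq ?mu ?mem_index_enum.
Qed.

Lemma conv u a (Q : pred 'I_k) : uniq u -> (forall c, c \in u) ->
  lS lam [seq c <- take (index a u) u | Q c] =
  \sum_(c | Q c && (index c u < index a u)%N) lam c.
Proof.
move=> uu mu; rewrite take_filter_idx // -filter_predI lS_full //.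

Qed.

Lemma conv_pre u a : uniq u -> (forall c, c \in u) ->
  pre lam u a = \sum_(c | (index c u < index a u)%N) lam c.
Proof.
move=> uu mu; rewrite /pre -(filter_predT (take _ _)) conv //.
Qed.

Lemma lS_top (C : {set 'I_k}) : lS lam (top C) = \sum_(b in C) lam b.
Proof. by rewrite /top lS_full ?enum_uniq // => c; rewrite mem_enum. Qed.

Lemma inIE l (C : {set 'I_k}) a (x : R) : inI l lam C a x =
  (l + pre lam (top C) a <= x < l + pre lam (top C) a + lam a).
Proof. by []. Qed.

Lemma tauE (C : {set 'I_k}) (sig : 'I_k -> 'I_k) a : tau lam C sig a = pre lam (bot C sig) a - pre lam (top C) a.
Proof. by []. Qed.

Lemma pickE l (C : {set 'I_k}) (sig : 'I_k -> 'I_k) (a : 'I_k) (y : R) :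
  a \in C -> inI l lam C a y -> iet l lam C sig y = y + tau lam C sig a.
Proof.
move=> aC hy; rewrite /iet; case: pickP => [a' /andP[a'C hy']|H].
  suff -> : a' = a by [].
  apply: (tile_uniq lam lam_gt0 (top C) (y - l)).
  - exact: filter_uniq (enum_uniq _).
  - by rewrite mem_filter a'C mem_enum.
  - by rewrite mem_filter aC mem_enum.
  - by move: hy'; rewrite inIE => /andP[h1 h2]; apply/andP; split; lra.
  - by move: hy; rewrite inIE => /andP[h1 h2]; apply/andP; split; lra.
by move: (H a); rewrite aC hy.
Qed.

Lemma perm_se : perm_eq s e.
Proof. by apply: uniq_perm; rewrite ?uniq_s ?uniq_e // => c; rewrite mem_s mem_e. Qed.

Lemma size_filter_s (C : {set 'I_k}) : size [seq b <- s | b \in C] = size (top C).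
Proof. by rewrite !size_filter; apply: (seq.permP perm_se). Qed.

Lemma map_nth_index (T : eqType) (t L : seq T) : uniq t -> size L = size t ->
  [seq nth a L (index a t) | a <- t] = L.
Proof.
case: t => [|x t] ut sL; first by move/size0nil: sL.
apply: (eq_from_nth (x0 := x)); first by rewrite size_map sL.
move=> i; rewrite size_map => hi.
rewrite (nth_map x) // index_uniq //; apply: set_nth_default; by rewrite sL.
Qed.

Lemma bot_restr (C : {set 'I_k}) : bot C (restr pi C) = [seq b <- s | b \in C].
Proof.
rewrite /bot -[RHS](map_nth_index _ (top C)) ?size_filter_s ?filter_uniq //.
apply/eq_in_map => a; rewrite mem_filter => /andP[aC _].
  by rewrite /restr aC.
have := enum_uniq (pred_of_simpl (@predT 'I_k)); by rewrite enumT.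
Qed.

End Spec.


Section Sums.
Variables (R : realFieldType) (k : nat) (lam : 'I_k -> R).
Hypothesis lam_gt0 : forall a, 0 < lam a.

Lemma subsum (P Q : pred 'I_k) : (forall a, P a -> Q a) ->
  \sum_(a | P a) lam a <= \sum_(a | Q a) lam a.
Proof.
move=> PQ; rewrite [X in _ <= X](bigID P) /=.
rewrite (eq_bigl P); last by move=> a; case Pa: (P a); rewrite ?andbF ?andbT ?PQ.
by rewrite lerDl; apply: sumr_ge0 => a _; apply: ltW.
Qed.

Lemma subsum2 (P Q : pred 'I_k) j : (forall a, P a -> Q a) -> ~~ P j -> Q j ->
  \sum_(a | P a) lam a + lam j <= \sum_(a | Q a) lam a.
Proof.
move=> PQ Pj Qj; rewrite [X in _ <= X](bigD1 j) //= addrC lerD2r.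
apply: subsum => a Pa; rewrite PQ //=; apply/eqP => e; move: Pj; by rewrite -e Pa.

Qed.

Lemma lS_tot (u : seq 'I_k) : uniq u -> (forall c, c \in u) -> lS lam u = \sum_a lam a.
Proof. by move=> uu mu; rewrite -(filter_predT u) lS_full. Qed.

End Sums.


Section Main.
Variables (R : realFieldType) (k : nat) (l : R) (lam : 'I_k -> R)
  (pi : {perm 'I_k}) (B : {set 'I_k}).
Hypothesis lam_gt0 : forall a, 0 < lam a.
Hypothesis hB0 : B != set0.
Hypothesis hcont : contiguous B.
Hypothesis hinv : T_invariant l lam pi B.

Let Q : pred 'I_k := fun a => [forall b in B, (a < b)%N].
Let G := \sum_(a | Q a) lam a.
Let LB := lenB lam B.
Let tot := \sum_a lam a.
Let E := e k.
Let S := s k pi.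

Lemma gammaE : gammaB l lam B = l + G. Proof. by []. Qed.
Lemma deltaE : deltaB l lam B = l + G + LB. Proof. by []. Qed.

Lemma LB_gt0 : 0 < LB.
Proof.
case/set0Pn: hB0 => b bB; rewrite /LB /lenB (bigD1 b) //= ltr_pwDl //.
by apply: sumr_ge0 => a _; apply: ltW.
Qed.

Lemma pre_e a : pre lam E a = \sum_(c : 'I_k | (c < a)%N) lam c.
Proof.
rewrite conv_pre ?uniq_e //; last exact: mem_e.
by apply: eq_bigl => c; rewrite !index_enum_ord.
Qed.

Lemma lS_E : lS lam E = tot. Proof. apply: lS_tot; [exact: uniq_e | exact: mem_e]. Qed.
Lemma lS_S : lS lam S = tot. Proof. apply: lS_tot; [exact: uniq_s | exact: mem_s]. Qed.

Lemma Q_notB a : Q a -> a \notin B.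
Proof. by move=> /forall_inP h; apply/negP => aB; move: (h a aB); rewrite ltnn. Qed.

Lemma below_above c : c \notin B -> Q c \/ (forall b, b \in B -> (b < c)%N).
Proof.
move=> cB; case Qc: (Q c); [by left | right => b bB].
move/negbT: Qc => /forall_inPn [b1 b1B]; rewrite -leqNgt => b1c.
rewrite ltnNge; apply/negP => cb.
have : c \in B by apply: (hcont b1 c b); rewrite ?b1c.
by rewrite (negbTE cB).
Qed.

Lemma GLB_le_tot : G + LB <= tot.
Proof.
rewrite /tot (bigID (fun a => a \in B)) /= [X in _ <= X]addrC lerD2r.
by apply: subsum => // a; apply: Q_notB.
Qed.

Lemma pre_e_B a : a \in B -> pre lam E a = G + pre lam (top B) a.
Proof.
move=> aB; rewrite (pre_split lam (fun c => c \in B)) //; last exact: mem_e.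
congr (_ + _); rewrite conv ?uniq_e //; last exact: mem_e.
apply: eq_bigl => c /=; rewrite !index_enum_ord; apply/andP/idP.
  move=> [cB ca]; apply/forall_inP => b bB; rewrite ltnNge; apply/negP => bc.
  by move: cB; rewrite (hcont b c a bB aB) // bc ltnW.
move=> Qc; split; first exact: Q_notB.
by move/forall_inP: Qc; apply.
Qed.

Lemma part1a b y : b \in B ->
  inI l lam [set: 'I_k] b y = inI (gammaB l lam B) lam B b y.
Proof. by move=> bB; rewrite !inIE top_setT pre_e_B // gammaE addrA. Qed.

Lemma inIB_iff x : inIB l lam B x = (gammaB l lam B <= x < deltaB l lam B).
Proof.
rewrite deltaE gammaE; apply/existsP/idP.
  move=> [b /andP[bB]]; rewrite part1a // inIE gammaE => /andP[h1 h2].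
  have h3 : pre lam (top B) b + lam b <= \sum_(b in B) lam b.
    by rewrite -lS_top; apply: (tile_le lam lam_gt0); rewrite mem_filter bB mem_enum.
  have h4 := pre_ge0 lam lam_gt0 (top B) b.
  apply/andP; split; rewrite /LB /lenB; lra.
move=> /andP[h1 h2].
have hr : 0 <= x - (l + G) < lS lam (top B).
  by rewrite lS_top; apply/andP; split; rewrite /LB /lenB in h2; lra.
have [a] := tile_ex lam (top B) _ hr (filter_uniq _ (enum_uniq _)).
rewrite mem_filter => /andP[aB _] /andP[h3 h4].
exists a; rewrite aB /= part1a // inIE gammaE; apply/andP; split; lra.
Qed.


Lemma inI_full a x : inI l lam [set: 'I_k] a x =
  (l + pre lam E a <= x < l + pre lam E a + lam a).
Proof. by rewrite inIE top_setT. Qed.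

Lemma Tx a x : inI l lam [set: 'I_k] a x ->
  T l lam pi x = x + pre lam S a - pre lam E a.
Proof.
move=> h; rewrite /T (pickE _ _ _ lam_gt0 _ _ _ a) ?in_setT //.
by rewrite tauE bot_setT top_setT addrA.
Qed.

Lemma Tpt a y : l + pre lam S a <= y < l + pre lam S a + lam a ->
  exists x, inI l lam [set: 'I_k] a x /\ T l lam pi x = y.
Proof.
move=> /andP[h1 h2]; exists (y - pre lam S a + pre lam E a).
have hi : inI l lam [set: 'I_k] a (y - pre lam S a + pre lam E a).
  by rewrite inI_full; apply/andP; split; lra.
by split => //; rewrite (Tx _ _ hi); lra.
Qed.

Lemma Jb x : inIB l lam B x ->
  exists2 b, b \in B & l + pre lam S b <= T l lam pi x < l + pre lam S b + lam b.
Proof.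
move=> /existsP[b /andP[bB hb]]; exists b => //.
rewrite (Tx _ _ hb); move: hb; rewrite inI_full => /andP[h1 h2].
apply/andP; split; lra.
Qed.

Lemma Juniq a b z : l + pre lam S a <= z < l + pre lam S a + lam a ->
  l + pre lam S b <= z < l + pre lam S b + lam b -> a = b.
Proof.
move=> /andP[h1 h2] /andP[h3 h4].
apply: (tile_uniq lam lam_gt0 S (z - l)); rewrite ?uniq_s ?mem_s //;
  apply/andP; split; lra.
Qed.

Lemma H1 b : b \in B -> G <= pre lam S b /\ pre lam S b + lam b <= G + LB.
Proof.
move=> bB.
have hx0 : inI l lam [set: 'I_k] b (l + pre lam E b).
  by rewrite inI_full lexx /= ltrDl.
have hB : inIB l lam B (l + pre lam E b) by apply/existsP; exists b; rewrite bB.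
have := (hinv (T l lam pi (l + pre lam E b))).1 (ex_intro _ _ (conj hB erefl)).
rewrite inIB_iff (Tx _ _ hx0) gammaE deltaE => /andP[h1 h2].
split; first lra.
case: (lerP (pre lam S b + lam b) (G + LB)) => // h3.
have [x [hx Tx_]] : exists x, inI l lam [set: 'I_k] b x /\ T l lam pi x = l + G + LB.
  by apply: Tpt; apply/andP; split; lra.
have hBx : inIB l lam B x by apply/existsP; exists b; rewrite bB.
have := (hinv (l + G + LB)).1 (ex_intro _ _ (conj hBx Tx_)).
by rewrite inIB_iff gammaE deltaE ltxx andbF.
Qed.

Lemma H2 c : c \notin B -> pre lam S c + lam c <= G \/ G + LB <= pre lam S c.
Proof.
move=> cB.
case: (lerP (pre lam S c + lam c) G) => h1; first by left.
case: (lerP (G + LB) (pre lam S c)) => h2; first by right.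
exfalso.
have LB0 := LB_gt0. have lc := lam_gt0 c.
have [y [hy1 hy2]] : exists y, (l + pre lam S c <= y < l + pre lam S c + lam c) /\
    inIB l lam B y.
  case: (lerP (pre lam S c) G) => h3.
    exists (l + G); rewrite inIB_iff gammaE deltaE.
    by split; apply/andP; split; lra.
  exists (l + pre lam S c); rewrite inIB_iff gammaE deltaE.
  by split; apply/andP; split; lra.
have [x [hx Txy]] := (hinv y).2 hy2.
have [b bB hb] := Jb _ hx.
rewrite Txy in hb.
have ebc := Juniq _ _ _ hb hy1.
by move: cB; rewrite -ebc bB.
Qed.


Lemma idx_lt_pre a c : (index c S < index a S)%N -> pre lam S c + lam c <= pre lam S a.
Proof. by move=> h; apply: (pre_lt lam lam_gt0); rewrite ?uniq_s ?mem_s. Qed.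

Lemma idx_cases a c : a != c -> (index c S < index a S)%N \/ (index a S < index c S)%N.
Proof.
move=> ac; case: (ltngtP (index c S) (index a S)) => h; [by left|by right|].
have := index_inj a (mem_s _ _ a) (mem_s _ _ c) (esym h).
by move/eqP: ac.
Qed.

Lemma Kpred a c : a \in B ->
  ((c \notin B) && (index c S < index a S)%N) = ((c \notin B) && (pre lam S c < G)).
Proof.
move=> aB; case cB: (c \in B) => //=.
have [h1 h2] := H1 a aB.
have la := lam_gt0 a; have lc := lam_gt0 c; have LB0 := LB_gt0.
have ac : a != c by apply/eqP => e; rewrite e cB in aB.
apply/idP/idP => h.
  have h3 := idx_lt_pre _ _ h.
  case: (H2 c (negbT cB)) => h4; lra.
case: (idx_cases _ _ ac) => // h'.
have h3 := idx_lt_pre _ _ h'; lra.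
Qed.

Lemma exists_G : exists2 x, x \in B & pre lam S x = G.
Proof.
have LB0 := LB_gt0; have GL := GLB_le_tot.
have G0 : 0 <= G by apply: sumr_ge0 => a _; apply: ltW.
have hr : 0 <= G < lS lam S by rewrite lS_S; apply/andP; split; lra.
have [x _ /andP[h1 h2]] := tile_ex lam S G hr (uniq_s _ _).
case xB: (x \in B).
  exists x => //; have [h3 _] := H1 x xB; lra.
have lx := lam_gt0 x.
by case: (H2 x (negbT xB)) => h3; lra.
Qed.

Lemma N a : a \in B -> \sum_(c | (c \notin B) && (index c S < index a S)%N) lam c = G.
Proof.
move=> aB; rewrite (eq_bigl _ _ (Kpred a ^~ aB)).
have [x xB hx] := exists_G.
rewrite -(eq_bigl _ _ (Kpred x ^~ xB)) -[RHS]hx conv_pre ?uniq_s //; last exact: mem_s.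
apply/esym/eq_bigl => c; case cB: (c \in B) => //=.
apply/negP => h; have := idx_lt_pre _ _ h; have [h1 _] := H1 c cB.
have lc := lam_gt0 c; lra.
Qed.

Lemma pre_S_B a : a \in B -> pre lam S a = G + pre lam (bot B (restr pi B)) a.
Proof.
move=> aB; rewrite bot_restr (pre_split lam (fun c => c \in B)) //; last exact: mem_s.
by rewrite conv ?uniq_s ?N //; exact: mem_s.
Qed.


Lemma part1b y : gammaB l lam B <= y < deltaB l lam B ->
  S_B l lam pi y = iet (gammaB l lam B) lam B (restr pi B) y.
Proof.
rewrite gammaE deltaE => /andP[h1 h2].
have hr : 0 <= y - (l + G) < lS lam (top B).
  by rewrite lS_top; apply/andP; split; rewrite /LB /lenB in h2; lra.
have [a] := tile_ex lam (top B) _ hr (filter_uniq _ (enum_uniq _)).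
rewrite mem_filter => /andP[aB _] /andP[h3 h4].
have hi : inI (gammaB l lam B) lam B a y.
  by rewrite inIE gammaE; apply/andP; split; lra.
rewrite (pickE _ _ _ lam_gt0 _ _ _ a) // tauE /S_B.
rewrite -part1a // in hi.
rewrite (Tx _ _ hi) pre_S_B // pre_e_B //; lra.
Qed.

Definition NeE c := \sum_(b | (b \in B) && (b < c)%N) lam b.
Definition NbS c := \sum_(b | (b \in B) && (index b S < index c S)%N) lam b.

Lemma pre_E_nB c : c \notin B -> pre lam E c = NeE c + pre lam (top (~: B)) c.
Proof.
move=> cB; rewrite (pre_split lam (fun c => c \in ~: B)) ?in_setC //; last exact: mem_e.
congr (_ + _); rewrite conv ?uniq_e //; last exact: mem_e.
by apply: eq_bigl => b; rewrite in_setC negbK !index_enum_ord.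
Qed.

Lemma pre_S_nB c : c \notin B -> pre lam S c = NbS c + pre lam (bot (~: B) (restr pi (~: B))) c.
Proof.
move=> cB; rewrite bot_restr (pre_split lam (fun c => c \in ~: B)) ?in_setC //; last exact: mem_s.
congr (_ + _); rewrite conv ?uniq_s //; last exact: mem_s.
by apply: eq_bigl => b; rewrite in_setC negbK.
Qed.

Lemma NeE_cases c : c \notin B ->
  (NeE c = 0 /\ pre lam E c + lam c <= G) \/ (NeE c = LB /\ G + LB <= pre lam E c).
Proof.
move=> cB; case: (below_above _ cB) => h.
  left; split.
    rewrite /NeE big_pred0 // => b; case bB: (b \in B) => //=.
    by move/forall_inP: h => /(_ b bB) cb; rewrite ltnNge ltnW.
  rewrite pre_e; apply: subsum2 => //=; last by rewrite ltnn.
  move=> a ac; apply/forall_inP => b bB; move/forall_inP: h => /(_ b bB).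
  exact: ltn_trans.
right; split.
  rewrite /NeE /LB /lenB; apply: eq_bigl => b; case bB: (b \in B) => //=; exact: h.
rewrite pre_e (bigID (fun a => a \in B)) /= addrC.
have -> : \sum_(i < k | (i < c)%N && (i \in B)) lam i = LB.
  rewrite /LB /lenB; apply: eq_bigl => b; case bB: (b \in B); rewrite ?andbF ?andbT //=; exact: h.
rewrite lerD2r; apply: (subsum _ _ _ lam_gt0) => a Qa.
case/set0Pn: hB0 => b0 b0B.
rewrite (Q_notB _ Qa) andbT; apply: (ltn_trans _ (h b0 b0B)).
by move/forall_inP: Qa; apply.
Qed.

Lemma NbS_cases c : c \notin B ->
  (NbS c = 0 /\ pre lam S c + lam c <= G) \/ (NbS c = LB /\ G + LB <= pre lam S c).
Proof.
move=> cB; have lc := lam_gt0 c.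
case: (H2 c cB) => h; [left|right]; split => //.
  rewrite /NbS big_pred0 // => b; case bB: (b \in B) => //=.
  apply/negP => hb; have := idx_lt_pre _ _ hb; have [h1 _] := H1 b bB.
  have lb := lam_gt0 b; lra.
rewrite /NbS /LB /lenB; apply: eq_bigl => b; case bB: (b \in B) => //=.
have bc : c != b by apply/eqP => e; rewrite e bB in cB.
case: (idx_cases _ _ bc) => // hb.
have := idx_lt_pre _ _ hb; have [_ h2] := H1 b bB.
have lb := lam_gt0 b; lra.
Qed.


Lemma inI_shift l' (C : {set 'I_k}) a y N :
  inI l' lam C a (y - N) = inI (l' + N) lam C a y.
Proof. by rewrite !inIE; apply/idP/idP => /andP[h1 h2]; apply/andP; split; lra. Qed.

Lemma inI_full_nB c x : c \notin B ->
  inI l lam [set: 'I_k] c x = inI (l + NeE c) lam (~: B) c x.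
Proof.
move=> cB; rewrite -inI_shift inI_full inIE pre_E_nB //.
by apply/idP/idP => /andP[h1 h2]; apply/andP; split; lra.
Qed.

Lemma pre_E_tot c : pre lam E c + lam c <= tot.
Proof. by rewrite -lS_E; apply: (tile_le lam lam_gt0); exact: mem_e. Qed.

Lemma pre_S_tot c : pre lam S c + lam c <= tot.
Proof. by rewrite -lS_S; apply: (tile_le lam lam_gt0); exact: mem_s. Qed.

Lemma G_ge0 : 0 <= G. Proof. by apply: sumr_ge0 => a _; apply: ltW. Qed.

Lemma ciE : compl_interval l lam B = (G == 0) || (G + LB == tot).
Proof.
rewrite /compl_interval gammaE deltaE /r_end.
rewrite /tot; congr orb; apply/eqP/eqP => h. lra. lra. lra. lra.
Qed.

Lemma leftE : left_Bbar l lam B =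
  if compl_interval l lam B then (if G == 0 then l + LB else l) else l.
Proof.
rewrite /left_Bbar gammaE deltaE.
have -> : (l + G == l) = (G == 0) by apply/eqP/eqP => h; lra.
by case: eqP => [->|]; rewrite ?addr0.
Qed.


Lemma left_interval c : c \notin B -> compl_interval l lam B ->
  left_Bbar l lam B = l + NeE c.
Proof.
move=> cB ci; rewrite leftE ci; move: ci; rewrite ciE.
have lc := lam_gt0 c; have := pre_E_tot c; have := pre_ge0 lam lam_gt0 E c.
have LB0 := LB_gt0; have G0 := G_ge0.
case: (NeE_cases c cB) => [[-> h]|[-> h]] h1 h2.
  have /negbTE -> : G != 0 by apply/eqP => e; rewrite e in h; lra.
  by rewrite addr0.
have /negbTE -> : G + LB != tot by apply/eqP => e; lra.
by rewrite orbF => ->.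
Qed.

Lemma Nb_interval c : c \notin B -> compl_interval l lam B -> NbS c = NeE c.
Proof.
move=> cB; rewrite ciE.
have lc := lam_gt0 c; have := pre_E_tot c; have := pre_S_tot c.
have := pre_ge0 lam lam_gt0 E c; have := pre_ge0 lam lam_gt0 S c.
have LB0 := LB_gt0; have G0 := G_ge0.
case: (NeE_cases c cB) => [[-> h]|[-> h]]; case: (NbS_cases c cB) => [[-> h']|[-> h']] //
  h1 h2 h3 h4 /orP[/eqP e|/eqP e]; lra.
Qed.

Lemma glue_nB c x : c \notin B -> inI l lam [set: 'I_k] c x -> glue l lam B x = x - NeE c.
Proof.
move=> cB; rewrite inI_full => /andP[h1 h2].
have lc := lam_gt0 c; have LB0 := LB_gt0.
rewrite /glue gammaE; case: (NeE_cases c cB) => [[-> h]|[-> h]].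
  by case: ltP => h3; rewrite -/LB; first [lra | exfalso; lra].
  case: ltP => h3; [exfalso; lra| rewrite -/LB; lra].
Qed.

Lemma unglue_nB c y : c \notin B -> inI l lam (~: B) c y -> unglue l lam B y = y + NeE c.
Proof.
move=> cB; rewrite inIE => /andP[h1 h2].
have lc := lam_gt0 c; have LB0 := LB_gt0.
have := pre_E_nB c cB.
rewrite /unglue gammaE; case: (NeE_cases c cB) => [[-> h]|[-> h]] e.
  by case: ltP => h3; rewrite -/LB; first [lra | exfalso; lra].
by case: ltP => h3; rewrite -/LB; first [lra | exfalso; lra].
Qed.


Lemma glue_T c x : c \notin B -> inI l lam [set: 'I_k] c x ->
  glue l lam B (T l lam pi x) = T l lam pi x - NbS c.
Proof.
move=> cB hx; rewrite (Tx _ _ hx); move: hx; rewrite inI_full => /andP[h1 h2].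
have lc := lam_gt0 c; have LB0 := LB_gt0.
rewrite /glue gammaE; case: (NbS_cases c cB) => [[-> h]|[-> h]].
  by case: ltP => h3; rewrite -/LB; first [lra | exfalso; lra].
by case: ltP => h3; rewrite -/LB; first [lra | exfalso; lra].
Qed.

Lemma part2a b y : b \in ~: B ->
  part_Bbar l lam B b y <-> inI (left_Bbar l lam B) lam (~: B) b y.
Proof.
move=> bB'; have bB : b \notin B by rewrite in_setC in bB'.
rewrite /part_Bbar; case ci: (compl_interval l lam B).
  by rewrite (left_interval b bB ci) inI_full_nB.
rewrite leftE ci; split.
  move=> [x [hx gx]]; rewrite -gx (glue_nB b x bB hx) inI_shift -inI_full_nB //.
move=> hy; exists (y + NeE b); split.
  by rewrite inI_full_nB // -inI_shift addrK.
rewrite (glue_nB b _ bB) ?addrK // inI_full_nB // -inI_shift addrK //.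
Qed.

Lemma part2b y : left_Bbar l lam B <= y < left_Bbar l lam B + lenB lam (~: B) ->
  S_Bbar l lam pi B y = iet (left_Bbar l lam B) lam (~: B) (restr pi (~: B)) y.
Proof.
move=> /andP[h1 h2].
have hr : 0 <= y - left_Bbar l lam B < lS lam (top (~: B)).
  by rewrite lS_top; apply/andP; split; rewrite /lenB in h2; lra.
have [c] := tile_ex lam (top (~: B)) _ hr (filter_uniq _ (enum_uniq _)).
rewrite mem_filter => /andP[cB' _] /andP[h3 h4].
have cB : c \notin B by rewrite in_setC in cB'.
have hi : inI (left_Bbar l lam B) lam (~: B) c y.
  by rewrite inIE; apply/andP; split; lra.
rewrite (pickE _ _ _ lam_gt0 _ _ _ c) // tauE /S_Bbar.
case ci: (compl_interval l lam B).
  rewrite (left_interval c cB ci) -inI_full_nB // in hi.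
  rewrite (Tx _ _ hi) pre_S_nB // pre_E_nB // (Nb_interval c cB ci); lra.
have hL : left_Bbar l lam B = l by rewrite leftE ci.
rewrite hL in hi.
rewrite (unglue_nB c y cB hi).
have hx : inI l lam [set: 'I_k] c (y + NeE c) by rewrite inI_full_nB // -inI_shift addrK.
rewrite (glue_T c _ cB hx) (Tx _ _ hx) pre_S_nB // pre_E_nB //; lra.
Qed.

Lemma main_sec :
  ((forall b, b \in B -> forall y,
      inI l lam [set: 'I_k] b y = inI (gammaB l lam B) lam B b y) /\
   (forall y, gammaB l lam B <= y < deltaB l lam B ->
      S_B l lam pi y = iet (gammaB l lam B) lam B (restr pi B) y)) /\
  ((forall b, b \in ~: B -> forall y,
      part_Bbar l lam B b y <-> inI (left_Bbar l lam B) lam (~: B) b y) /\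
   (forall y, left_Bbar l lam B <= y < left_Bbar l lam B + lenB lam (~: B) ->
      S_Bbar l lam pi B y = iet (left_Bbar l lam B) lam (~: B) (restr pi (~: B)) y)).
Proof.
split; split.
- by move=> b bB y; apply: part1a.
- exact: part1b.
- by move=> b bB y; apply: part2a.
- exact: part2b.
Qed.

End Main.

Theorem lemma4p9 (R : realFieldType) (k : nat) (l : R) (lam : 'I_k -> R)
  (pi : {perm 'I_k}) (B : {set 'I_k}) :
  (forall a, 0 < lam a) ->
  B != set0 -> B != [set: 'I_k] ->
  contiguous B ->
  T_invariant l lam pi B ->
  (* S_B is the IET over B (inherited order) with permutation pi|_B *)
  ((forall b, b \in B -> forall y,
      inI l lam [set: 'I_k] b y = inI (gammaB l lam B) lam B b y) /\
   (forall y, gammaB l lam B <= y < deltaB l lam B ->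
      S_B l lam pi y = iet (gammaB l lam B) lam B (restr pi B) y)) /\
  (* S_Bbar is the IET over Bbar (inherited order) with permutation pi|_Bbar *)
  ((forall b, b \in ~: B -> forall y,
      part_Bbar l lam B b y <-> inI (left_Bbar l lam B) lam (~: B) b y) /\
   (forall y, left_Bbar l lam B <= y < left_Bbar l lam B + lenB lam (~: B) ->
      S_Bbar l lam pi B y = iet (left_Bbar l lam B) lam (~: B) (restr pi (~: B)) y)).
Proof.
move=> h1 h2 _ h4 h5.
exact: main_sec.
Qed.
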